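(* Let $(a_n)_{n\ge0}$ be nonzero complex numbers with $|a_0|\ge|a_1|\ge\cdots$ and $\sum_n|a_n|^2<\infty$, let $T$ be the weighted shift $Te_n=a_ne_{n+1}$, and let $(c_k)_{k\ge1}$ be complex numbers. Then the sequence $p_n(T)=\sum_{k=1}^nc_kT^k$ converges in operator norm (to an element of $\mathcal A_T$) if and only if $\sum_{k=1}^\infty|c_k|^2|a_0a_1\cdots a_{k-1}|^2<\infty$.
   Context: $H$ is a complex Hilbert space with orthonormal basis $\{e_n\}_{n\ge0}$, $Te_n=a_ne_{n+1}$, and $\mathcal A_T$ is the operator-norm closure in $\mathcal B(H)$ of the polynomials $p(T)$ with $p(0)=0$. *)

(* Defs.v *)
From Stdlib Require Import Reals.
From Coquelicot Require Import Coquelicot.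
Open Scope R_scope.

(* The Hilbert space H with orthonormal basis (e_n) is modelled, up to the
   unitary identifying e_n with the n-th unit vector, by l^2(N; C):
   vectors are coefficient sequences x : nat -> C with sum |x_n|^2 < oo. *)
Definition vec := nat -> C.

Definition in_l2 (x : vec) : Prop := ex_series (fun n => (Cmod (x n)) ^ 2).

Definition l2norm (x : vec) : R := sqrt (Series (fun n => (Cmod (x n)) ^ 2)).

Definition vzero : vec := fun _ => RtoC 0.
Definition vadd (x y : vec) : vec := fun n => Cplus (x n) (y n).
Definition vsub (x y : vec) : vec := fun n => Cminus (x n) (y n).
Definition vscale (c : C) (x : vec) : vec := fun n => Cmult c (x n).

(* Weighted shift T e_n = a_n e_{n+1}, i.e. (T x)_0 = 0, (T x)_{n+1} = a_n x_n. *)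
Definition wshift (a : nat -> C) (x : vec) : vec :=
  fun n => match n with O => RtoC 0 | S m => Cmult (a m) (x m) end.

Fixpoint wshift_pow (a : nat -> C) (k : nat) (x : vec) : vec :=
  match k with O => x | S k' => wshift a (wshift_pow a k' x) end.

(* p_n(T) x = sum_{k=1}^n c_k T^k x   (c 0 is never used) *)
Fixpoint poly_op (a c : nat -> C) (n : nat) (x : vec) : vec :=
  match n with
  | O => vzero
  | S m => vadd (poly_op a c m x) (vscale (c (S m)) (wshift_pow a (S m) x))
  end.

Fixpoint wprod (a : nat -> C) (k : nat) : C :=
  match k with O => RtoC 1 | S k' => Cmult (wprod a k') (a k') end.

Definition op_norm_converges (P : nat -> vec -> vec) : Prop :=
  exists S : vec -> vec,
    forall eps : R, 0 < eps ->
      exists N : nat, forall n : nat, (N <= n)%nat ->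
        forall x : vec, in_l2 x ->
          in_l2 (vsub (P n x) (S x)) /\
          l2norm (vsub (P n x) (S x)) <= eps * l2norm x.

(* Main.v *)
Require Import Defs.
From Stdlib Require Import Reals Lra Lia Arith Bool.
From Coquelicot Require Import Coquelicot.
Open Scope R_scope.

Fixpoint sm (f : nat -> R) (n : nat) : R :=
  match n with O => 0 | S m => sm f m + f m end.

Lemma sm_sum_n f n : sum_n f n = sm f (S n).
Proof.
  induction n; simpl.
  - rewrite sum_O. lra.
  - rewrite sum_Sn, IHn. simpl. reflexivity.
Qed.

Lemma sm_ext f g n : (forall k, (k < n)%nat -> f k = g k) -> sm f n = sm g n.
Proof.
  induction n; simpl; intros H; auto.
  rewrite IHn by (intros; apply H; lia). rewrite H by lia. auto.
Qed.

Lemma sm_le f g n : (forall k, (k < n)%nat -> f k <= g k) -> sm f n <= sm g n.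
Proof.
  induction n; simpl; intros H; [lra|].
  assert (sm f n <= sm g n) by (apply IHn; intros; apply H; lia).
  specialize (H n ltac:(lia)). lra.
Qed.

Lemma sm_nonneg f n : (forall k, 0 <= f k) -> 0 <= sm f n.
Proof. induction n; simpl; intros H; [lra|]. specialize (IHn H). specialize (H n). lra. Qed.

Lemma sm_zero n : sm (fun _ => 0) n = 0.
Proof. induction n; simpl; lra. Qed.

Lemma sm_nonneg_b f n : (forall k, (k < n)%nat -> 0 <= f k) -> 0 <= sm f n.
Proof. intros H. apply Rle_trans with (sm (fun _ => 0) n).
  rewrite sm_zero; lra. apply sm_le; auto. Qed.

Lemma sm_mono f n m : (forall k, 0 <= f k) -> (n <= m)%nat -> sm f n <= sm f m.
Proof.
  intros H Hnm. induction Hnm; [lra|]. simpl. specialize (H m). lra.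
Qed.

Lemma sm_plus f g n : sm (fun k => f k + g k) n = sm f n + sm g n.
Proof. induction n; simpl; lra. Qed.

Lemma sm_scal c f n : sm (fun k => c * f k) n = c * sm f n.
Proof. induction n; simpl; [lra|]. rewrite IHn. ring. Qed.

Lemma sm_shift f n : sm f (S n) = f O + sm (fun k => f (S k)) n.
Proof. induction n; simpl in *; [lra|]. rewrite IHn. ring. Qed.

Lemma sm_rev f j : sm (fun k => f (j - S k)%nat) j = sm f j.
Proof.
  revert f; induction j; intros f; [reflexivity|].
  rewrite (sm_shift f j).
  rewrite <- (IHj (fun k => f (S k))).
  change (sm (fun k => f (S j - S k)%nat) (S j)) with
    (sm (fun k => f (S j - S k)%nat) j + f (S j - S j)%nat).
  replace (S j - S j)%nat with O by lia.
  rewrite (sm_ext (fun k => f (S j - S k)%nat) (fun k => f (S (j - S k)))) by (intros; f_equal; lia).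
  ring.
Qed.

Lemma quad_lemma A B Cc : 0 <= Cc -> (forall t, 0 <= A - 2 * t * B + t ^ 2 * Cc) -> B ^ 2 <= A * Cc.
Proof.
  intros HC H. destruct (Rle_lt_or_eq_dec _ _ HC) as [Hp|Hz].
  - specialize (H (B / Cc)).
    replace (A - 2 * (B / Cc) * B + (B / Cc) ^ 2 * Cc) with ((A * Cc - B^2) / Cc) in H by (field; lra).
    assert (0 <= A * Cc - B^2).
    { destruct (Rle_or_lt 0 (A * Cc - B^2)); auto.
      exfalso. assert ((A * Cc - B ^ 2) / Cc < 0). { apply Rdiv_neg_pos; lra. } lra. }
    lra.
  - subst Cc. destruct (Req_dec B 0) as [HB|HB].
    + subst. lra.
    + exfalso. specialize (H ((A + 1) / (2 * B))).
      replace (A - 2 * ((A + 1) / (2 * B)) * B + ((A + 1) / (2 * B)) ^ 2 * 0) with (-1) in H by (field; auto). lra.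
Qed.

Lemma cs u v n : (sm (fun k => u k * v k) n) ^ 2 <= sm (fun k => u k ^ 2) n * sm (fun k => v k ^ 2) n.
Proof.
  apply quad_lemma.
  - apply sm_nonneg. intros; apply pow2_ge_0.
  - intros t.
    replace (sm (fun k => u k ^ 2) n - 2 * t * sm (fun k => u k * v k) n + t ^ 2 * sm (fun k => v k ^ 2) n)
      with (sm (fun k => (u k - t * v k) ^ 2) n).
    + apply sm_nonneg. intros; apply pow2_ge_0.
    + induction n; cbn [sm]; [ring|]. rewrite IHn. ring.
Qed.

Lemma cs_w f g n : (forall k, 0 <= f k) ->
  (sm (fun k => f k * g k) n) ^ 2 <= sm f n * sm (fun k => f k * g k ^ 2) n.
Proof.
  intros Hf.
  pose proof (cs (fun k => sqrt (f k)) (fun k => sqrt (f k) * g k) n) as H.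
  rewrite (sm_ext (fun k => sqrt (f k) * (sqrt (f k) * g k)) (fun k => f k * g k)) in H
    by (intros; rewrite <- Rmult_assoc, sqrt_sqrt; auto).
  rewrite (sm_ext (fun k => sqrt (f k) ^ 2) f) in H
    by (intros; rewrite pow2_sqrt; auto).
  rewrite (sm_ext (fun k => (sqrt (f k) * g k) ^ 2) (fun k => f k * g k ^ 2)) in H
    by (intros; rewrite Rpow_mult_distr, pow2_sqrt; auto).
  exact H.
Qed.

Lemma tri G J : sm (fun j => sm (fun k => G (j - S k)%nat k) j) J
  = sm (fun k => sm (fun i => G i k) (J - S k)) J.
Proof.
  induction J; simpl; [auto|]. rewrite IHJ.
  rewrite (sm_ext (fun k => sm (fun i => G i k) (S J - S k)) (fun k => sm (fun i => G i k) (J - S k) + G (J - S k)%nat k)).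
  - replace (J - J)%nat with O by lia. simpl. rewrite sm_plus. ring.
  - intros k Hk. replace (S J - S k)%nat with (S (J - S k)) by lia. reflexivity.
Qed.

Lemma L1 f M : (forall n, 0 <= f n) -> (forall n, sm f n <= M) -> ex_series f /\ Series f <= M.
Proof.
  intros Hf HM.
  assert (Hg : Un_growing (fun n => sum_n f n)).
  { intros n. rewrite !sm_sum_n. simpl. specialize (Hf (S n)). lra. }
  assert (Hb : has_ub (fun n => sum_n f n)).
  { exists M. intros x [n ->]. rewrite sm_sum_n. auto. }
  destruct (growing_cv _ Hg Hb) as [l Hl].
  apply is_lim_seq_Reals in Hl.
  assert (Hs : is_series f l) by exact Hl.
  split. exists l; auto.
  rewrite (is_series_unique f l Hs).
  assert (Rbar_le l M).
  { apply (is_lim_seq_le (fun n => sum_n f n) (fun _ => M) l M); auto.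
    intros n; rewrite sm_sum_n; auto. apply is_lim_seq_const. }
  simpl in H. auto.
Qed.

Lemma L2 f n : (forall k, 0 <= f k) -> ex_series f -> sm f n <= Series f.
Proof.
  intros Hf Hex.
  pose proof (Series_correct _ Hex) as Hs.
  assert (Rbar_le (sm f n) (Series f)).
  { apply (is_lim_seq_le_loc (fun _ => sm f n) (sum_n f)); [| apply is_lim_seq_const | exact Hs].
    exists n. intros m Hm. rewrite sm_sum_n. apply sm_mono; auto. }
  simpl in H; auto.
Qed.

Lemma L3 f : ex_series f -> forall eps, 0 < eps -> exists N, forall n m, (N <= n)%nat -> (N <= m)%nat ->
  Rabs (sm f m - sm f n) < eps.
Proof.
  intros [l Hl] eps He.
  assert (Hc : Cauchy_crit (fun n => sum_n f n)).
  { apply CV_Cauchy. exists l. apply is_lim_seq_Reals. exact Hl. }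
  destruct (Hc eps He) as [N HN].
  exists (S N). intros n m Hn Hm.
  destruct n as [|n]; [lia|]. destruct m as [|m]; [lia|].
  specialize (HN m n ltac:(lia) ltac:(lia)). unfold Rdist in HN.
  rewrite !sm_sum_n in HN. auto.
Qed.

Fixpoint pr (a : nat -> C) (i k : nat) : C :=
  match k with O => RtoC 1 | S k' => Cmult (pr a i k') (a (i + k')%nat) end.

Lemma wprod_pr a k : wprod a k = pr a 0 k.
Proof. induction k; simpl; auto. rewrite IHk. reflexivity. Qed.

Lemma wsp_coord a k x j : wshift_pow a k x j =
  if (k <=? j)%nat then Cmult (pr a (j - k) k) (x (j - k)%nat) else RtoC 0.
Proof.
  revert j; induction k; intros j.
  - simpl. rewrite Nat.sub_0_r. ring.
  - simpl wshift_pow. destruct j as [|m]; [reflexivity|].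
    unfold wshift. rewrite IHk.
    change ((S k <=? S m)%nat) with ((k <=? m)%nat).
    destruct (Nat.leb_spec k m).
    + replace (S m - S k)%nat with (m - k)%nat by lia. simpl pr.
      replace (m - k + k)%nat with m by lia. ring.
    + ring.
Qed.

Definition Tt a c x j K := Cmult (c K) (wshift_pow a K x j).

Lemma Pdiff a c x j n m : (n <= m)%nat ->
  Cmod (Cminus (poly_op a c m x j) (poly_op a c n x j)) <=
  sm (fun k => if (n <=? k)%nat then Cmod (Tt a c x j (S k)) else 0) m.
Proof.
  induction m; intros H.
  - replace n with O by lia. simpl. unfold vzero. 
    replace (Cminus (RtoC 0) (RtoC 0)) with (RtoC 0) by ring. rewrite Cmod_0. lra.
  - destruct (Nat.eq_dec n (S m)) as [->|Hn].
    + replace (Cminus (poly_op a c (S m) x j) (poly_op a c (S m) x j)) with (RtoC 0) by ring. rewrite Cmod_0.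
      apply sm_nonneg. intros k. destruct (_ <=? _)%nat; [apply Cmod_ge_0|lra].
    + cbn [sm]. specialize (IHm ltac:(lia)).
      replace (Cminus (poly_op a c (S m) x j) (poly_op a c n x j)) with
        (Cplus (Cminus (poly_op a c m x j) (poly_op a c n x j)) (Tt a c x j (S m))).
      2:{ change (poly_op a c (S m) x j) with (Cplus (poly_op a c m x j) (Cmult (c (S m)) (wshift_pow a (S m) x j))). unfold Tt. ring. }
      destruct (Nat.leb_spec n m); [|lia].
      eapply Rle_trans. apply Cmod_triangle. lra.
Qed.

Lemma mono a (ha : forall n, Cmod (a (S n)) <= Cmod (a n)) n m : (n <= m)%nat -> Cmod (a m) <= Cmod (a n).
Proof. intros H; induction H; [lra|]. specialize (ha m). lra. Qed.

Lemma prbound a (ha : forall n, Cmod (a (S n)) <= Cmod (a n)) (h0 : a O <> RtoC 0) i k :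
  Cmod (pr a i (S k)) <= Cmod (a i) / Cmod (a O) * Cmod (pr a O (S k)).
Proof.
  assert (H0 : 0 < Cmod (a O)) by (apply Cmod_gt_0; auto).
  induction k.
  - simpl. rewrite !Cmod_mult, Cmod_1, Nat.add_0_r. right. field. lra.
  - change (pr a i (S (S k))) with (Cmult (pr a i (S k)) (a (i + S k)%nat)).
    change (pr a O (S (S k))) with (Cmult (pr a O (S k)) (a (O + S k)%nat)).
    rewrite !Cmod_mult. simpl (O + S k)%nat.
    assert (Cmod (a (i + S k)%nat) <= Cmod (a (S k))) by (apply mono; auto; lia).
    pose proof (Cmod_ge_0 (a (i + S k)%nat)).
    pose proof (Cmod_ge_0 (pr a i (S k))).
    assert (0 <= Cmod (a i) / Cmod (a O) * Cmod (pr a O (S k))).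
    { apply Rmult_le_pos; [apply Rdiv_le_0_compat; [apply Cmod_ge_0|lra]|apply Cmod_ge_0]. }
    apply Rle_trans with (Cmod (a i) / Cmod (a O) * Cmod (pr a O (S k)) * Cmod (a (i + S k)%nat)).
    + apply Rmult_le_compat_r; auto.
    + rewrite Rmult_assoc. apply Rmult_le_compat_l. 
      * apply Rdiv_le_0_compat; [apply Cmod_ge_0|lra].
      * apply Rmult_le_compat_l; auto. apply Cmod_ge_0.
Qed.

Definition ff a (x : vec) i := Cmod (x i) * (Cmod (a i) / Cmod (a O)).
Definition gg a c n K := if (n <? K)%nat then Cmod (c K) * Cmod (wprod a K) else 0.

Lemma ff_nonneg a x i : 0 <= ff a x i.
Proof. unfold ff. apply Rmult_le_pos; [apply Cmod_ge_0|].
  destruct (Req_dec (Cmod (a O)) 0) as [E|E]. rewrite E. unfold Rdiv. rewrite Rinv_0. lra.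
  apply Rdiv_le_0_compat; [apply Cmod_ge_0|]. pose proof (Cmod_ge_0 (a O)). lra. Qed.

Lemma gg_nonneg a c n K : 0 <= gg a c n K.
Proof. unfold gg. destruct (_ <? _)%nat; [apply Rmult_le_pos; apply Cmod_ge_0|lra]. Qed.

Lemma dbound a c x n j (ha : forall n, Cmod (a (S n)) <= Cmod (a n)) (h0 : a O <> RtoC 0) :
  Cmod (Cminus (poly_op a c n x j) (poly_op a c j x j)) <=
  sm (fun k => ff a x (j - S k)%nat * gg a c n (S k)) j.
Proof.
  assert (Hnn : 0 <= sm (fun k => ff a x (j - S k)%nat * gg a c n (S k)) j).
  { apply sm_nonneg. intros; apply Rmult_le_pos; [apply ff_nonneg|apply gg_nonneg]. }
  destruct (Nat.le_gt_cases j n) as [Hjn|Hjn].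
  - eapply Rle_trans. apply Pdiff; auto.
    eapply Rle_trans; [|exact Hnn].
    apply Rle_trans with (sm (fun _ => 0) n); [|rewrite sm_zero; lra].
    apply sm_le. intros k Hk.
    destruct (Nat.leb_spec j k); [|lra].
    unfold Tt. rewrite wsp_coord.
    destruct (Nat.leb_spec (S k) j); [lia|].
    replace (Cmult (c (S k)) (RtoC 0)) with (RtoC 0) by ring. rewrite Cmod_0. lra.
  - replace (Cminus (poly_op a c n x j) (poly_op a c j x j)) with
      (Copp (Cminus (poly_op a c j x j) (poly_op a c n x j))) by ring.
    rewrite Cmod_opp.
    eapply Rle_trans. apply Pdiff; lia.
    apply sm_le. intros k Hk.
    destruct (Nat.leb_spec n k).
    + unfold Tt, gg. rewrite wsp_coord.
      destruct (Nat.leb_spec (S k) j); [|lia].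
      destruct (Nat.ltb_spec n (S k)); [|lia].
      rewrite !Cmod_mult. rewrite wprod_pr.
      pose proof (prbound a ha h0 (j - S k) k).
      unfold ff.
      pose proof (Cmod_ge_0 (c (S k))). pose proof (Cmod_ge_0 (x (j - S k)%nat)).
      apply Rle_trans with (Cmod (c (S k)) * ((Cmod (a (j - S k)%nat) / Cmod (a O) * Cmod (pr a O (S k))) * Cmod (x (j - S k)%nat))).
      * apply Rmult_le_compat_l; auto. apply Rmult_le_compat_r; auto.
      * right; ring.
    + apply Rmult_le_pos; [apply ff_nonneg|apply gg_nonneg].
Qed.

Lemma tailsum h n J : sm (fun k => if (n <=? k)%nat then h k else 0) J = sm h (Nat.max J n) - sm h n.
Proof.
  induction J; cbn [sm].
  - simpl. lra.
  - rewrite IHJ. destruct (Nat.leb_spec n J).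
    + replace (Nat.max (S J) n) with (S J) by lia. replace (Nat.max J n) with J by lia.
      cbn [sm]. ring.
    + replace (Nat.max (S J) n) with n by lia. replace (Nat.max J n) with n by lia. ring.
Qed.

Lemma dsum a c x n J Fb (ha : forall n, Cmod (a (S n)) <= Cmod (a n)) (h0 : a O <> RtoC 0) :
  0 <= Fb -> (forall m, sm (ff a x) m <= Fb) ->
  sm (fun j => Cmod (Cminus (poly_op a c n x j) (poly_op a c j x j)) ^ 2) J <=
  Fb ^ 2 * sm (fun k => gg a c n (S k) ^ 2) J.
Proof.
  intros HF HFb.
  apply Rle_trans with (sm (fun j => Fb * sm (fun k => ff a x (j - S k)%nat * gg a c n (S k) ^ 2) j) J).
  - apply sm_le. intros j _.
    pose proof (dbound a c x n j ha h0) as Hd.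
    set (conv := sm (fun k => ff a x (j - S k)%nat * gg a c n (S k)) j) in *.
    apply Rle_trans with (conv ^ 2).
    { apply pow_incr. split; [apply Cmod_ge_0|exact Hd]. }
    pose proof (cs_w (fun k => ff a x (j - S k)%nat) (fun k => gg a c n (S k)) j (fun k => ff_nonneg a x _)) as Hc.
    fold conv in Hc. eapply Rle_trans; [exact Hc|].
    apply Rmult_le_compat_r.
    + apply sm_nonneg. intros; apply Rmult_le_pos; [apply ff_nonneg|apply pow2_ge_0].
    + rewrite (sm_rev (ff a x) j). apply HFb.
  - rewrite sm_scal.
    rewrite (tri (fun i k => ff a x i * gg a c n (S k) ^ 2) J).
    replace (Fb ^ 2) with (Fb * Fb) by ring. rewrite Rmult_assoc.
    apply Rmult_le_compat_l; auto.
    rewrite <- sm_scal. apply sm_le. intros k _.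
    rewrite (sm_ext (fun i => ff a x i * gg a c n (S k) ^ 2) (fun i => gg a c n (S k) ^ 2 * ff a x i)) by (intros; ring).
    rewrite sm_scal. rewrite Rmult_comm. apply Rmult_le_compat_r; [apply pow2_ge_0|apply HFb].
Qed.

Lemma ffbound a x (h0 : a O <> RtoC 0) (hx : in_l2 x) (hal : ex_series (fun n => Cmod (a n) ^ 2)) m :
  sm (ff a x) m <= sqrt (Series (fun n => Cmod (x n) ^ 2) * (Series (fun n => Cmod (a n) ^ 2) / Cmod (a O) ^ 2)).
Proof.
  assert (H0 : 0 < Cmod (a O)) by (apply Cmod_gt_0; auto).
  assert (Hnn : 0 <= sm (ff a x) m) by (apply sm_nonneg; apply ff_nonneg).
  rewrite <- (sqrt_pow2 (sm (ff a x) m) Hnn).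
  apply sqrt_le_1_alt.
  pose proof (cs (fun i => Cmod (x i)) (fun i => Cmod (a i) / Cmod (a O)) m) as Hc.
  unfold ff. cbv beta in Hc. eapply Rle_trans; [exact Hc|].
  rewrite (sm_ext (fun k => (Cmod (a k) / Cmod (a O)) ^ 2) (fun k => / Cmod (a O) ^ 2 * Cmod (a k) ^ 2))
    by (intros; field; lra).
  rewrite sm_scal.
  apply Rmult_le_compat.
  - apply sm_nonneg; intros; apply pow2_ge_0.
  - apply Rmult_le_pos. left; apply Rinv_0_lt_compat; apply pow_lt; lra. apply sm_nonneg; intros; apply pow2_ge_0.
  - apply L2; auto. intros; apply pow2_ge_0.
  - unfold Rdiv. rewrite (Rmult_comm (Series _)). apply Rmult_le_compat_l.
    left; apply Rinv_0_lt_compat; apply pow_lt; lra.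
    apply L2; auto. intros; apply pow2_ge_0.
Qed.

Lemma forward a c (ha_nz : forall n : nat, a n <> RtoC 0)
  (ha_dec : forall n : nat, Cmod (a (S n)) <= Cmod (a n))
  (ha_l2 : ex_series (fun n => (Cmod (a n)) ^ 2)) :
  ex_series (fun k => (Cmod (c (S k))) ^ 2 * (Cmod (wprod a (S k))) ^ 2) ->
  op_norm_converges (fun n => poly_op a c n).
Proof.
  intros Hh.
  set (h := fun k => (Cmod (c (S k))) ^ 2 * (Cmod (wprod a (S k))) ^ 2) in *.
  exists (fun x j => poly_op a c j x j).
  intros eps He.
  set (Bb := Series (fun n => Cmod (a n) ^ 2) / Cmod (a O) ^ 2).
  assert (HB : 0 <= Bb).
  { unfold Bb. apply Rdiv_le_0_compat.
    apply Rle_trans with (sm (fun n => Cmod (a n) ^ 2) 0). simpl; lra.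
    apply L2; auto; intros; apply pow2_ge_0.
    apply pow_lt. apply Cmod_gt_0; auto. }
  set (delta := eps ^ 2 / (Bb + 1)).
  assert (Hd : 0 < delta) by (unfold delta; apply Rdiv_lt_0_compat; [apply pow_lt; lra|lra]).
  destruct (L3 h Hh delta Hd) as [N HN].
  exists N. intros n Hn x Hx.
  set (Sx := Series (fun n => Cmod (x n) ^ 2)).
  assert (HSx : 0 <= Sx).
  { apply Rle_trans with (sm (fun n => Cmod (x n) ^ 2) 0). simpl; lra.
    apply L2; auto; intros; apply pow2_ge_0. }
  set (Fb := sqrt (Sx * Bb)).
  assert (HFb : forall m, sm (ff a x) m <= Fb) by (intros; apply ffbound; auto).
  assert (HF0 : 0 <= Fb) by apply sqrt_pos.
  assert (Hbound : forall J, sm (fun j => Cmod (vsub (poly_op a c n x) (fun j => poly_op a c j x j) j) ^ 2) J <= eps ^ 2 * Sx).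
  { intros J. unfold vsub.
    eapply Rle_trans. apply (dsum a c x n J Fb ha_dec (ha_nz O) HF0 HFb).
    rewrite (sm_ext (fun k => gg a c n (S k) ^ 2) (fun k => if (n <=? k)%nat then h k else 0)).
    2:{ intros k _. unfold gg, h. destruct (Nat.ltb_spec n (S k)); destruct (Nat.leb_spec n k); try lia; ring. }
    rewrite tailsum.
    assert (sm h (Nat.max J n) - sm h n <= delta).
    { specialize (HN n (Nat.max J n) Hn ltac:(lia)). apply Rabs_def2 in HN. lra. }
    unfold Fb. rewrite pow2_sqrt by (apply Rmult_le_pos; auto).
    apply Rle_trans with (Sx * Bb * delta).
    - apply Rmult_le_compat_l; auto. apply Rmult_le_pos; auto.
    - unfold delta. 
      assert (Bb * (eps ^ 2 / (Bb + 1)) <= eps ^ 2).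
      { apply Rmult_le_reg_r with (Bb + 1); [lra|].
        unfold Rdiv. rewrite Rmult_assoc, Rmult_assoc, Rinv_l by lra.
        pose proof (pow2_ge_0 eps). nra. }
      rewrite Rmult_assoc. rewrite (Rmult_comm (eps^2) Sx). apply Rmult_le_compat_l; auto. }
  destruct (L1 _ (eps ^ 2 * Sx) (fun n => pow2_ge_0 _) Hbound) as [Hex Hle].
  split; [exact Hex|].
  unfold l2norm. fold Sx.
  rewrite <- (sqrt_pow2 eps) by lra. rewrite <- sqrt_mult by (try apply pow2_ge_0; auto).
  apply sqrt_le_1_alt. exact Hle.
Qed.

Definition e0 : vec := fun j => if (j =? 0)%nat then RtoC 1 else RtoC 0.

Lemma Pe0 a c M j : poly_op a c M e0 j =
  if andb (1 <=? j)%nat (j <=? M)%nat then Cmult (c j) (wprod a j) else RtoC 0.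
Proof.
  induction M.
  - simpl. unfold vzero. destruct j; reflexivity.
  - change (poly_op a c (S M) e0 j) with (Cplus (poly_op a c M e0 j) (Cmult (c (S M)) (wshift_pow a (S M) e0 j))).
    rewrite IHM, wsp_coord.
    destruct (lt_eq_lt_dec j (S M)) as [[Hl|He]|Hg].
    + destruct (Nat.leb_spec (S M) j); [lia|].
      destruct (Nat.leb_spec j M); destruct (Nat.leb_spec j (S M)); try lia;
        destruct (1 <=? j)%nat; simpl; ring.
    + subst j. destruct (Nat.leb_spec (S M) (S M)); [|lia].
      destruct (Nat.leb_spec (S M) M); [lia|].
      replace (S M - S M)%nat with O by lia. unfold e0. simpl Nat.eqb.
      rewrite wprod_pr. simpl andb. cbv iota. ring.
    + destruct (Nat.leb_spec (S M) j); [|lia].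
      destruct (Nat.leb_spec j M); [lia|]. destruct (Nat.leb_spec j (S M)); [lia|].
      unfold e0. destruct (Nat.eqb_spec (j - S M) 0); [lia|].
      rewrite !andb_false_r. ring.
Qed.

Lemma e0_series : is_series (fun n => Cmod (e0 n) ^ 2) 1.
Proof.
  assert (H : is_lim_seq (sum_n (fun n => Cmod (e0 n) ^ 2)) 1); [|exact H].
  apply (is_lim_seq_ext (fun _ => 1)). 2: apply is_lim_seq_const.
  intros n. rewrite sm_sum_n, sm_shift.
  rewrite (sm_ext _ (fun _ => 0)). rewrite sm_zero. unfold e0. simpl. rewrite Cmod_1. ring.
  intros k _. unfold e0. simpl. rewrite Cmod_0. ring.
Qed.

Lemma trunc Q N L : (forall j, 0 <= Q j) -> sm (fun j => if (j <=? N)%nat then Q j else 0) L <= sm Q (S N).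
Proof.
  intros HQ.
  assert (E : sm (fun j => if (j <=? N)%nat then Q j else 0) L = sm Q (Nat.min L (S N))).
  { induction L; [reflexivity|]. cbn [sm]. rewrite IHL.
    destruct (Nat.leb_spec L N).
    + replace (Nat.min (S L) (S N)) with (S L) by lia. replace (Nat.min L (S N)) with L by lia. reflexivity.
    + replace (Nat.min (S L) (S N)) with (S N) by lia. replace (Nat.min L (S N)) with (S N) by lia. ring. }
  rewrite E. apply sm_mono; auto. lia.
Qed.

Lemma sq3 A p q r : 0 <= A -> 0 <= p -> 0 <= q -> 0 <= r -> A <= p + q + r -> A ^ 2 <= 3 * (p ^ 2 + q ^ 2 + r ^ 2).
Proof. intros. assert (A ^ 2 <= (p + q + r) ^ 2) by (apply pow_incr; lra).
  assert (0 <= (p - q) ^ 2 + (q - r) ^ 2 + (p - r) ^ 2) by (repeat apply Rplus_le_le_0_compat; apply pow2_ge_0).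
  assert (3 * (p ^ 2 + q ^ 2 + r ^ 2) - (p + q + r) ^ 2 = (p - q) ^ 2 + (q - r) ^ 2 + (p - r) ^ 2) by ring.
  lra. Qed.

Lemma backward a c :
  op_norm_converges (fun n => poly_op a c n) ->
  ex_series (fun k => (Cmod (c (S k))) ^ 2 * (Cmod (wprod a (S k))) ^ 2).
Proof.
  intros [Sop HS].
  set (h := fun k => (Cmod (c (S k))) ^ 2 * (Cmod (wprod a (S k))) ^ 2).
  assert (He0 : in_l2 e0) by (exists 1; apply e0_series).
  assert (Hn0 : l2norm e0 = 1).
  { unfold l2norm. rewrite (is_series_unique _ _ e0_series). apply sqrt_1. }
  destruct (HS 1 Rlt_0_1) as [N HN].
  assert (Hd : forall n, (N <= n)%nat -> forall L,
    sm (fun j => Cmod (Cminus (poly_op a c n e0 j) (Sop e0 j)) ^ 2) L <= 1).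
  { intros n Hn L. destruct (HN n Hn e0 He0) as [Hex Hle].
    rewrite Hn0, Rmult_1_r in Hle. unfold l2norm in Hle.
    assert (Hs0 : 0 <= Series (fun j => Cmod (vsub (poly_op a c n e0) (Sop e0) j) ^ 2)).
    { apply Rle_trans with (sm (fun j => Cmod (vsub (poly_op a c n e0) (Sop e0) j) ^ 2) 0). simpl; lra.
      apply L2; auto; intros; apply pow2_ge_0. }
    apply Rle_trans with (Series (fun j => Cmod (vsub (poly_op a c n e0) (Sop e0) j) ^ 2)).
    - apply (L2 (fun j => Cmod (vsub (poly_op a c n e0) (Sop e0) j) ^ 2)); auto. intros; apply pow2_ge_0.
    - rewrite <- (pow2_sqrt _ Hs0). replace 1 with (1 ^ 2) by ring. apply pow_incr.
      split; [apply sqrt_pos|exact Hle]. }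
  set (Q := fun j => Cmod (Cmult (c j) (wprod a j)) ^ 2).
  set (B := 3 * (1 + 1 + sm Q (S N))).
  assert (Hid : forall M, sm h M = sm (fun j => Cmod (poly_op a c M e0 j) ^ 2) (S M)).
  { intros M. rewrite sm_shift. rewrite Pe0. simpl andb. cbv iota. rewrite Cmod_R, Rabs_R0.
    rewrite (sm_ext (fun k => Cmod (poly_op a c M e0 (S k)) ^ 2) h). ring.
    intros k Hk. rewrite Pe0. destruct (Nat.leb_spec (S k) M); [|lia]. simpl andb.
    unfold h. rewrite Cmod_mult. ring. }
  assert (HBM : forall M, (N <= M)%nat -> sm h M <= B).
  { intros M HM. rewrite Hid.
    apply Rle_trans with (3 * (sm (fun j => Cmod (Cminus (poly_op a c M e0 j) (Sop e0 j)) ^ 2) (S M)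
       + sm (fun j => Cmod (Cminus (poly_op a c N e0 j) (Sop e0 j)) ^ 2) (S M)
       + sm (fun j => if (j <=? N)%nat then Q j else 0) (S M))).
    - rewrite <- !sm_plus, <- sm_scal. apply sm_le. intros j _.
      assert (HQ : Cmod (poly_op a c N e0 j) ^ 2 <= (if (j <=? N)%nat then Q j else 0)).
      { rewrite Pe0. unfold Q. destruct (Nat.leb_spec j N); destruct (1 <=? j)%nat; simpl andb; cbv iota;
          try rewrite Cmod_R, Rabs_R0; try lra.
          all: first [lra | (replace (0^2) with 0 by ring; first [lra | apply pow2_ge_0])]. }
      apply Rle_trans with (3 * (Cmod (Cminus (poly_op a c M e0 j) (Sop e0 j)) ^ 2 +
          Cmod (Cminus (poly_op a c N e0 j) (Sop e0 j)) ^ 2 + Cmod (poly_op a c N e0 j) ^ 2)).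
      + apply sq3; try apply Cmod_ge_0.
        replace (poly_op a c M e0 j) with
          (Cplus (Cplus (Cminus (poly_op a c M e0 j) (Sop e0 j)) (Copp (Cminus (poly_op a c N e0 j) (Sop e0 j))))
              (poly_op a c N e0 j)) at 1 by ring.
        eapply Rle_trans. apply Cmod_triangle. eapply Rle_trans. apply Rplus_le_compat_r. apply Cmod_triangle.
        rewrite Cmod_opp. lra.
      + lra.
    - unfold B. apply Rmult_le_compat_l; [lra|].
      pose proof (Hd M HM (S M)). pose proof (Hd N (le_n N) (S M)).
      pose proof (trunc Q N (S M) (fun j => pow2_ge_0 _)). lra. }
  assert (Hh : forall k, 0 <= h k).
  { intros; unfold h; apply Rmult_le_pos; apply pow2_ge_0. }
  apply (L1 h B Hh). intros M.
  destruct (Nat.le_gt_cases N M). apply HBM; auto.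
  apply Rle_trans with (sm h N). apply sm_mono; auto; lia. apply HBM; auto.
Qed.

Theorem mainTheorem10 (a c : nat -> C)
  (ha_nz : forall n : nat, a n <> RtoC 0)
  (ha_dec : forall n : nat, Cmod (a (S n)) <= Cmod (a n))
  (ha_l2 : ex_series (fun n => (Cmod (a n)) ^ 2)) :
  op_norm_converges (fun n => poly_op a c n)
  <->
  ex_series (fun k => (Cmod (c (S k))) ^ 2 * (Cmod (wprod a (S k))) ^ 2).
Proof.
  split.
  - apply backward.
  - apply forward; auto.
Qed.
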